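(* Let $\mathcal F=\{F_1,\dots,F_k\}$, $\mathcal I=\{0,1\}^k\setminus\{\boldsymbol 0\}$, $\mathcal I_0=\{0,1\}^k$, $I=2^k-1$, let $\mathcal F_{asc}$ be an ascending class of subsets of $\mathcal F$, $\mathcal F_{des}=2^{\mathcal F}\setminus\mathcal F_{asc}\setminus\{\varnothing\}$, and let $\mathbf A$ be the design matrix of the HAS model generated by $\mathcal F_{asc}$ (rows indexed by $W\in\mathcal F_{des}$, columns by $\boldsymbol i\in\mathcal I$, entry $1$ iff $W\subseteq\phi(\boldsymbol i)$). Let $\mathcal X_{\mathbf A}$ be the associated variety and $\overline{\mathcal X}_{\mathbf A}$ its projective closure, with the extra homogenizing coordinate $p_0$ corresponding to the zero cell $\boldsymbol 0$. Then the intersection of $\overline{\mathcal X}_{\mathbf A}$ with the interior of the $I$-dimensional simplex $\mathrm{int}(\Delta_I)$ is homeomorphic to the hierarchical log-linear model $LL(\mathcal F_{asc})$ on $\mathcal I_0$.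
   Context: $\phi(\boldsymbol i)$ is the set of features whose coordinate in $\boldsymbol i$ equals $1$. $\mathcal X_{\mathbf A}=\{\boldsymbol p\in\mathbb R^{I}_{\ge0}:\ \boldsymbol p^{\boldsymbol d^+}=\boldsymbol p^{\boldsymbol d^-}\ \text{for all integer }\boldsymbol d\in\mathrm{Ker}(\mathbf A)\}$, where $\boldsymbol d^\pm$ are the positive and negative parts of $\boldsymbol d$ and powers are componentwise monomials. The projective closure $\overline{\mathcal X}_{\mathbf A}$ is the smallest projective variety in projective space with homogeneous coordinates $(p_0:p(\boldsymbol i))_{\boldsymbol i\in\mathcal I}$ whose dehomogenization at $p_0=1$ is $\mathcal X_{\mathbf A}$ (obtained by homogenizing, with $p_0$, the polynomials of a Gröbner basis of the ideal of $\mathcal X_{\mathbf A}$). Its intersection with $\mathrm{int}(\Delta_I)$ means the set of strictly positive vectors $(p_0,(p(\boldsymbol i))_{\boldsymbol i\in\mathcal I})$ with coordinates summing to $1$ lying in (the cone of) $\overline{\mathcal X}_{\mathbf A}$. $LL(\mathcal F_{asc})$ is the set of strictly positive probability distributions $\boldsymbol p$ on $\mathcal I_0$ such that, writing $\log p(\boldsymbol i)=\sum_{V\subseteq\phi(\boldsymbol i)}\beta_V$ ($V$ over all subsets of $\mathcal F$, including $\varnothing$; a unique representation), $\beta_V=0$ for all $V\in\mathcal F_{asc}$. *)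

(* Defs.v *)
From HB Require Import structures.
From mathcomp Require Import all_boot all_order all_algebra.
From mathcomp Require Import all_classical all_reals all_analysis.
From mathcomp Require mpoly.
Set Implicit Arguments. Unset Strict Implicit. Unset Printing Implicit Defensive.
Import Order.TTheory GRing.Theory Num.Theory.
Local Open Scope ring_scope.

(* Features F = {F_1,...,F_k} are indexed by 'I_k. *)
Definition cell (k : nat) := {ffun 'I_k -> bool}.

Definition cell0 (k : nat) : cell k := [ffun => false].

Definition phi (k : nat) (i : cell k) : {set 'I_k} := [set j | i j].

Definition ascending (k : nat) (Fasc : {set {set 'I_k}}) : Prop :=
  forall V W : {set 'I_k}, V \in Fasc -> V \subset W -> W \in Fasc.

Definition Fdes (k : nat) (Fasc : {set {set 'I_k}}) : {set {set 'I_k}} :=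
  [set W | (W \notin Fasc) && (W != finset.set0)].

Definition designA (k : nat) (W : {set 'I_k}) (i : cell k) : int :=
  (W \subset phi i)%:R.

(* integer vectors d in Ker(A); d is indexed by I (coordinate at the zero cell
   is forced to be 0, i.e. d is a vector of Z^I) *)
Definition in_kerA (k : nat) (Fasc : {set {set 'I_k}}) (d : {ffun cell k -> int}) : Prop :=
  d (cell0 k) = 0 /\
  forall W, W \in Fdes Fasc ->
    \sum_(i : cell k | i != cell0 k) designA W i * d i = 0.

Definition dplus (z : int) : nat := absz (Num.max z 0).
Definition dminus (z : int) : nat := absz (Num.max (- z) 0).

(* X_A, as a set of vectors of R^I_{>=0}; a point p of R^I is encoded as a
   function on all cells whose coordinate at the zero cell is ignored. *)
Definition XA (R : realType) (k : nat) (Fasc : {set {set 'I_k}})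
  (p : {ffun cell k -> R}) : Prop :=
  (forall i, i != cell0 k -> 0 <= p i) /\
  forall d, in_kerA Fasc d ->
    \prod_(i : cell k | i != cell0 k) p i ^+ dplus (d i) =
    \prod_(i : cell k | i != cell0 k) p i ^+ dminus (d i).

(* Homogeneous coordinates (p_0 : p(i))_{i in I} of the ambient projective space
   are indexed by all cells (p_0 is the coordinate of the zero cell). *)
Definition hpoly (R : realType) (k : nat) := mpoly.mpoly #|{: cell k}| R.

Definition evalc (R : realType) (k : nat) (g : hpoly R k) (x : {ffun cell k -> R}) : R :=
  mpoly.meval (fun j : 'I_#|{: cell k}| => x (enum_val j)) g.

Definition homogeneous (R : realType) (k : nat) (g : hpoly R k) : Prop :=
  exists n : nat, forall m, mpoly.mcoeff m g != 0 -> mpoly.mdeg m = n.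

(* (the cone over) the projective closure of X_A: the smallest projective
   variety containing X_A embedded in the chart p_0 = 1, i.e. the common zero
   set of all homogeneous polynomials vanishing on {(1, q) : q in X_A}. *)
Definition in_proj_closure (R : realType) (k : nat) (Fasc : {set {set 'I_k}})
  (x : {ffun cell k -> R}) : Prop :=
  forall g : hpoly R k, homogeneous g ->
    (forall q : {ffun cell k -> R}, q (cell0 k) = 1 -> XA Fasc q -> evalc g q = 0) ->
    evalc g x = 0.

Definition int_simplex (R : realType) (k : nat) (x : {ffun cell k -> R}) : Prop :=
  (forall i, 0 < x i) /\ \sum_i x i = 1.

Definition closure_int_simplex (R : realType) (k : nat) (Fasc : {set {set 'I_k}})
  (x : {ffun cell k -> R}) : Prop :=
  in_proj_closure Fasc x /\ int_simplex x.

Definition LL (R : realType) (k : nat) (Fasc : {set {set 'I_k}})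
  (p : {ffun cell k -> R}) : Prop :=
  int_simplex p /\
  exists beta : {set 'I_k} -> R,
    (forall i : cell k, ln (p i) = \sum_(V : {set 'I_k} | V \subset phi i) beta V) /\
    (forall V, V \in Fasc -> beta V = 0).

(* continuity of a map on a subset of R^C (Euclidean topology; coordinatewise
   epsilon-delta, equivalent to the sup-norm) *)
Definition continuous_on (R : realType) (C D : finType) (A : {ffun C -> R} -> Prop)
  (f : {ffun C -> R} -> {ffun D -> R}) : Prop :=
  forall x, A x -> forall e : R, 0 < e -> exists2 dl : R, 0 < dl &
    forall y, A y -> (forall c, `|x c - y c| < dl) -> forall c', `|f x c' - f y c'| < e.

Definition homeomorphic (R : realType) (C D : finType)
  (A : {ffun C -> R} -> Prop) (B : {ffun D -> R} -> Prop) : Prop :=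
  exists (f : {ffun C -> R} -> {ffun D -> R}) (g : {ffun D -> R} -> {ffun C -> R}),
    (forall x, A x -> B (f x)) /\
    (forall y, B y -> A (g y)) /\
    (forall x, A x -> g (f x) = x) /\
    (forall y, B y -> f (g y) = y) /\
    continuous_on A f /\ continuous_on B g.

(* Main.v *)
Require Import Defs.
From HB Require Import structures.
From mathcomp Require Import all_boot all_order all_algebra.
From mathcomp Require Import all_classical all_reals all_analysis.
From mathcomp Require mpoly.
From mathcomp Require Import zify.
Import -(notations) mpoly.
Set Implicit Arguments. Unset Strict Implicit. Unset Printing Implicit Defensive.
Import Order.TTheory GRing.Theory Num.Theory.
Local Open Scope ring_scope.


Lemma sign_sq (R : numDomainType) (n : nat) : ((-1 : R) ^+ n) * ((-1) ^+ n) = 1.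
Proof. by rewrite -exprMn mulrNN mulr1 expr1n. Qed.

Lemma mobius_core (R : numDomainType) (T : finType) (A B : {set T}) :
  \sum_(V : {set T} | (A \subset V) && (V \subset B)) ((-1 : R) ^+ #|V|)
  = (A == B)%:R * (-1) ^+ #|A|.
Proof.
case: (boolP (A \subset B)) => AB; last first.
  rewrite big_pred0; last first.
    move=> V /=; apply/negbTE; apply: contra AB => /andP[h1 h2].
    exact: (fintype.subset_trans h1 h2).
  by case: eqP AB => [->|]; rewrite ?subxx ?mul0r.
case: (eqVneq A B) => [<-|nAB].
  rewrite (big_pred1 A) ?mul1r // => V /=.
  by rewrite eq_sym finset.eqEsubset andbC.
rewrite mul0r.
have: A \proper B by rewrite finset.properEneq nAB.
case/fintype.properP => _ [x xB xA].
pose h (V : {set T}) := if x \in V then V :\ x else x |: V.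
have hK : involutive h.
  move=> V; rewrite /h; case: (boolP (x \in V)) => xV.
    by rewrite !inE eqxx /= finset.setD1K.
  by rewrite finset.setU11 finset.setU1K.
set S := (X in X = 0).
have SN : S = - S.
  rewrite {1}/S (reindex_inj (can_inj hK)) /= /S -sumrN.
  apply: eq_big => V.
    rewrite /h; case: (boolP (x \in V)) => xV.
      rewrite finset.subsetD1 xA andbT; congr andb.
      apply/fintype.subsetP/fintype.subsetP => H y yV.
        by case: (eqVneq y x) => [->//|nyx]; apply: H; rewrite !inE nyx.
      by move: yV; rewrite !inE => /andP[_ /H].
    rewrite finset.subUset finset.sub1set xB /=; congr andb.
    apply/fintype.subsetP/fintype.subsetP => H y yA.
      have := H y yA; rewrite !inE => /orP[/eqP yx|//].
      by move: xA; rewrite -yx yA.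
    by rewrite !inE H ?orbT.
  move=> _; rewrite /h; case: (boolP (x \in V)) => xV.
    by rewrite [in RHS](cardsD1 x V) xV exprS mulN1r opprK.
  by rewrite cardsU1 xV exprS mulN1r.
have : S + S = 0 by rewrite {1}SN addNr.
by rewrite -mulr2n => /eqP; rewrite mulrn_eq0 /= => /eqP.
Qed.



Import -(notations) mpoly.
Definition mk (k : nat) (e : cell k -> nat) : mpoly.multinom #|{: cell k}| :=
  mpoly.Multinom [tuple e (enum_val j) | j < #|{: cell k}|].

Lemma mkE k (e : cell k -> nat) j : mk e j = e (enum_val j).
Proof. exact: mpoly.mnmE. Qed.

Lemma big_cell (R : realType) k (F : cell k -> R) :
  \prod_(j < #|{: cell k}|) F (enum_val j) = \prod_i F i.
Proof. by rewrite -big_enum_val. Qed.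

Lemma sum_cell k (F : cell k -> nat) :
  (\sum_(j < #|{: cell k}|) F (enum_val j) = \sum_i F i)%N.
Proof. by rewrite -big_enum_val. Qed.

Lemma evalcX (R : realType) k (e : cell k -> nat) (y : {ffun cell k -> R}) :
  evalc (@mpoly.mpolyX _ R (mk e)) y = \prod_i y i ^+ e i.
Proof.
rewrite /evalc mpoly.mevalX -big_cell; apply: eq_bigr => j _; by rewrite mkE.
Qed.

Lemma mdeg_mk k (e : cell k -> nat) : mpoly.mdeg (mk e) = (\sum_i e i)%N.
Proof. rewrite mpoly.mdegE -sum_cell; apply: eq_bigr => j _; by rewrite mkE. Qed.

Lemma evalc_scale (R : realType) k (g : hpoly R k) n (c : R) (x : {ffun cell k -> R}) :
  (forall m, mpoly.mcoeff m g != 0 -> mpoly.mdeg m = n) ->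
  evalc g [ffun i => c * x i] = c ^+ n * evalc g x.
Proof.
move=> H; rewrite /evalc !mpoly.mevalE mulr_sumr; apply: eq_big_seq => m mS.
rewrite mulrCA; congr (_ * _).
under eq_bigr => i _ do rewrite ffunE exprMn.
rewrite big_split /= prodrXr -mpoly.mdegE H //.
by rewrite -mpoly.mcoeff_msupp.
Qed.



Definition qx (R : realType) k (x : {ffun cell k -> R}) : {ffun cell k -> R} :=
  [ffun i => x i / x (cell0 k)].

Lemma x_scale (R : realType) k (x : {ffun cell k -> R}) :
  x (cell0 k) != 0 -> x = [ffun i => x (cell0 k) * qx x i].
Proof. by move=> h; apply/ffunP => i; rewrite !ffunE mulrC divfK. Qed.

Lemma qx0 (R : realType) k (x : {ffun cell k -> R}) :
  x (cell0 k) != 0 -> qx x (cell0 k) = 1.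
Proof. by move=> h; rewrite ffunE divff. Qed.

Lemma prod_split (R : realType) k (y : {ffun cell k -> R}) a (f : cell k -> nat) :
  y (cell0 k) = 1 ->
  \prod_i y i ^+ (if i == cell0 k then a else f i) =
  \prod_(i | i != cell0 k) y i ^+ f i.
Proof.
move=> h; rewrite (bigD1 (cell0 k)) //= eqxx h expr1n mul1r.
by apply: eq_bigr => i /negbTE ->.
Qed.

Lemma sum_split k a (f : cell k -> nat) :
  (\sum_i (if i == cell0 k then a else f i) =
  a + \sum_(i | i != cell0 k) f i)%N.
Proof.
rewrite (bigD1 (cell0 k)) //= eqxx; congr (_ + _)%N.
by apply: eq_bigr => i /negbTE ->.
Qed.

Lemma closure_to_XA (R : realType) k (Fasc : {set {set 'I_k}}) (x : {ffun cell k -> R}) :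
  int_simplex x -> in_proj_closure Fasc x -> XA Fasc (qx x).
Proof.
move=> [xpos _] Hcl.
have x0n : x (cell0 k) != 0 by rewrite gt_eqF.
split.
  by move=> i _; rewrite ffunE divr_ge0 // ltW.
move=> d Hd.
set P := (\sum_(i | i != cell0 k) dplus (d i))%N.
set M := (\sum_(i | i != cell0 k) dminus (d i))%N.
pose e1 i := if i == cell0 k then (M - P)%N else dplus (d i).
pose e2 i := if i == cell0 k then (P - M)%N else dminus (d i).
pose g : hpoly R k := @mpolyX _ R (mk e1) - @mpolyX _ R (mk e2).
have Hev : forall y : {ffun cell k -> R}, y (cell0 k) = 1 ->
   evalc g y = \prod_(i | i != cell0 k) y i ^+ dplus (d i)
             - \prod_(i | i != cell0 k) y i ^+ dminus (d i).
  move=> y y0; rewrite /evalc mevalB -!/(evalc _ y) !evalcX.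
  by rewrite !prod_split.
have Hhom : homogeneous g.
  exists (mdeg (mk e1)) => m; rewrite mcoeffB !mcoeffX.
  case: (eqVneq (mk e1) m) => [->//|_].
  case: (eqVneq (mk e2) m) => [<- _|_]; last by rewrite subrr eqxx.
  rewrite !mdeg_mk !sum_split -/P -/M; lia.
have Hc : evalc g x = 0.
  apply: (Hcl g Hhom) => q q0 Xq.
  by rewrite Hev // (Xq.2 d Hd) subrr.
move: Hc.
have -> : evalc g x = x (cell0 k) ^+ (mdeg (mk e1)) * evalc g (qx x).
  rewrite {1}(x_scale x0n); apply: evalc_scale.
  move=> m; rewrite mcoeffB !mcoeffX.
  case: (eqVneq (mk e1) m) => [->//|_].
  case: (eqVneq (mk e2) m) => [<- _|_]; last by rewrite subrr eqxx.
  rewrite !mdeg_mk !sum_split -/P -/M; lia.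
rewrite Hev ?qx0 // => /eqP; rewrite mulf_eq0 expf_eq0 (negbTE x0n) andbF /=.
by rewrite subr_eq0 => /eqP.
Qed.

Lemma XA_to_closure (R : realType) k (Fasc : {set {set 'I_k}}) (x : {ffun cell k -> R}) :
  int_simplex x -> XA Fasc (qx x) -> in_proj_closure Fasc x.
Proof.
move=> [xpos _] Xq g [n Hn] Hv.
have x0n : x (cell0 k) != 0 by rewrite gt_eqF.
rewrite (x_scale x0n) (evalc_scale _ _ Hn) Hv ?mulr0 //.
exact: qx0.
Qed.




Lemma dpm (R : realType) (z : int) :
  ((dplus z)%:R - (dminus z)%:R : R) = z%:~R.
Proof.
case: z => n; rewrite /dplus /dminus /=.
  have -> : Num.max (- (n%:Z)) 0 = 0 by apply/max_idPr; rewrite oppr_le0.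
  by rewrite subr0.
by rewrite NegzE sub0r.
Qed.

Lemma prod_exp (R : realType) k (y : {ffun cell k -> R}) (e : cell k -> nat) :
  (forall i, i != cell0 k -> 0 < y i) ->
  \prod_(i | i != cell0 k) y i ^+ e i =
  expR (\sum_(i | i != cell0 k) (e i)%:R * ln (y i)).
Proof.
move=> yp; rewrite expR_sum; apply: eq_bigr => i hi.
by rewrite mulr_natl -lnXn ?yp // lnK // posrE exprn_gt0 ?yp.
Qed.

Lemma binom_iff (R : realType) k (y : {ffun cell k -> R}) (d : {ffun cell k -> int}) :
  (forall i, i != cell0 k -> 0 < y i) ->
  (\prod_(i | i != cell0 k) y i ^+ dplus (d i) =
   \prod_(i | i != cell0 k) y i ^+ dminus (d i)) <->
  \sum_(i | i != cell0 k) (d i)%:~R * ln (y i) = 0.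
Proof.
move=> yp; rewrite !prod_exp //.
have -> : \sum_(i | i != cell0 k) (d i)%:~R * ln (y i) =
   \sum_(i | i != cell0 k) (dplus (d i))%:R * ln (y i) -
   \sum_(i | i != cell0 k) (dminus (d i))%:R * ln (y i).
  by rewrite -sumrB; apply: eq_bigr => i _; rewrite -mulrBl dpm.
split; first by move/expR_inj => ->; rewrite subrr.
by move/eqP; rewrite subr_eq0 => /eqP ->.
Qed.



Definition cellOf k (U : {set 'I_k}) : cell k := [ffun j => j \in U].

Lemma phiK k : cancel (@phi k) (@cellOf k).
Proof. by move=> i; apply/ffunP => j; rewrite ffunE inE. Qed.

Lemma cellOfK k : cancel (@cellOf k) (@phi k).
Proof. by move=> U; apply/setP => j; rewrite inE ffunE. Qed.

Lemma phi0 k : phi (cell0 k) = finset.set0.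
Proof. by apply/setP => j; rewrite !inE ffunE. Qed.

Lemma phi_bij k : bijective (@phi k).
Proof. exists (@cellOf k); [exact: phiK | exact: cellOfK]. Qed.

Lemma sum_sub0 (R : realType) k (b : {set 'I_k} -> R) :
  \sum_(V : {set 'I_k} | V \subset finset.set0) b V = b finset.set0.
Proof.
by rewrite (big_pred1 finset.set0) // => V; rewrite /= finset.subset0.
Qed.

Lemma qx_pos (R : realType) k (x : {ffun cell k -> R}) :
  int_simplex x -> forall i, 0 < qx x i.
Proof. by move=> [xp _] i; rewrite ffunE divr_gt0. Qed.

Lemma ln_qx (R : realType) k (x : {ffun cell k -> R}) :
  int_simplex x -> forall i, ln (qx x i) = ln (x i) - ln (x (cell0 k)).
Proof. by move=> [xp _] i; rewrite ffunE ln_div // posrE. Qed.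

Lemma beta_to_XA (R : realType) k (Fasc : {set {set 'I_k}}) (x : {ffun cell k -> R})
  (beta : {set 'I_k} -> R) :
  int_simplex x ->
  (forall i : cell k, ln (x i) = \sum_(V : {set 'I_k} | V \subset phi i) beta V) ->
  (forall V, V \in Fasc -> beta V = 0) ->
  XA Fasc (qx x).
Proof.
move=> xs Hl H0; split=> [i _|d Hd]; first exact/ltW/qx_pos.
apply/binom_iff => [i _|]; first exact: qx_pos.
have Lq : forall i, ln (qx x i) =
    \sum_(W | (W \in Fdes Fasc) && (W \subset phi i)) beta W.
  move=> i; rewrite ln_qx // !Hl phi0 sum_sub0.
  rewrite (bigD1 finset.set0) ?finset.sub0set //= addrAC subrr add0r.
  rewrite [LHS]big_mkcond [RHS]big_mkcond; apply: eq_bigr => V _ /=.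
  rewrite inE; case: (boolP (V \in Fasc)) => VF /=; first by rewrite H0 // !if_same.
  by rewrite andbC.
under eq_bigr => i _ do rewrite Lq mulr_sumr.
rewrite (exchange_big_dep (fun W => W \in Fdes Fasc)) /=; last by move=> i W _ /andP[].
rewrite big1 // => W HW.
have := congr1 (fun z : int => (z%:~R : R)) (Hd.2 W HW).
rewrite rmorph_sum /= => HS.
apply: (etrans _ (_ : beta W * (\sum_(i | i != cell0 k) ((designA W i * d i)%:~R : R)) = 0)); last by rewrite HS mulr0z mulr0.
rewrite mulr_sumr.
rewrite [LHS]big_mkcond [RHS]big_mkcond; apply: eq_bigr => i _ /=.
rewrite HW /designA; case: (W \subset phi i); case: (i != cell0 k) => //=.
  by rewrite mul1r mulrC.
by rewrite mul0r mulr0.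
Qed.

Lemma XA_to_beta (R : realType) k (Fasc : {set {set 'I_k}}) (x : {ffun cell k -> R}) :
  finset.set0 \notin Fasc ->
  int_simplex x -> XA Fasc (qx x) ->
  exists beta : {set 'I_k} -> R,
    (forall i : cell k, ln (x i) = \sum_(V : {set 'I_k} | V \subset phi i) beta V) /\
    (forall V, V \in Fasc -> beta V = 0).
Proof.
move=> F0 xs XAq.
have x0n : x (cell0 k) != 0 by rewrite gt_eqF //; case: xs.
pose L i := ln (qx x i).
have L0 : L (cell0 k) = 0 by rewrite /L qx0 // ln1.
pose beta (V : {set 'I_k}) := (V == finset.set0)%:R * ln (x (cell0 k)) +
   \sum_(i | phi i \subset V) (-1) ^+ (#|V| + #|phi i|) * L i.
exists beta; split.
  move=> j; rewrite big_split /=.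
  rewrite (bigD1 finset.set0) ?finset.sub0set //= eqxx mul1r big1 ?addr0; last first.
    by move=> V /andP[_ /negbTE ->]; rewrite mul0r.
  rewrite (exchange_big_dep xpredT) //=.
  rewrite (eq_bigr (fun i => (i == j)%:R * L i)).
    rewrite (bigD1 j) //= eqxx mul1r big1 ?addr0; last first.
      by move=> i /negbTE ->; rewrite mul0r.
    by rewrite /L ln_qx // addrC subrK.
  move=> i _.
  rewrite (eq_bigl (fun V : {set 'I_k} => (phi i \subset V) && (V \subset phi j))); last first.
    by move=> V; rewrite andbC.
  under eq_bigr => V _ do rewrite exprD mulrAC.
  rewrite -!mulr_suml mobius_core (inj_eq (can_inj (@phiK k))).
  case: (i == j); last by rewrite !mul0r.
  by rewrite !mul1r mulrAC sign_sq mul1r.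
move=> V VF.
have V0 : V != finset.set0 by apply: contraNneq F0 => <-.
rewrite /beta (negbTE V0) mul0r add0r.
pose d : {ffun cell k -> int} := [ffun i => if i == cell0 k then 0
   else (phi i \subset V)%:R * (-1) ^+ (#|V| + #|phi i|)].
have Hd : in_kerA Fasc d.
  split; first by rewrite ffunE eqxx.
  move=> W HW.
  have W0 : W != finset.set0 by move: HW; rewrite inE => /andP[].
  have WV : W != V by move: HW; rewrite inE => /andP[WF _]; apply: contraNneq WF => ->.
  pose G (U : {set 'I_k}) : int :=
    if (W \subset U) && (U \subset V) then (-1) ^+ (#|V| + #|U|) else 0.
  transitivity (\sum_i G (phi i)).
    rewrite [RHS](bigD1 (cell0 k)) //=.
    have -> : G (phi (cell0 k)) = 0 by rewrite /G phi0 finset.subset0 (negbTE W0).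
    rewrite add0r.
    apply: eq_bigr => i /negbTE i0; rewrite ffunE i0 /G /designA.
    by case: (W \subset phi i); case: (phi i \subset V); rewrite /= ?mul1r ?mul0r.
  rewrite -(@reindex _ _ _ _ _ (@phi k) xpredT G (ssrbool.onW_bij _ (@phi_bij k))) /=.
  rewrite -big_mkcond /=.
  under eq_bigr => U _ do rewrite exprD.
  by rewrite -mulr_sumr mobius_core (negbTE WV) mul0r mulr0.
have := XAq.2 d Hd.
move/binom_iff => /(_ (fun i _ => qx_pos xs i)) HS.
rewrite -[RHS]HS big_mkcond [RHS]big_mkcond /=.
apply: eq_bigr => i _.
case: (eqVneq i (cell0 k)) => [->|i0] /=.
  by rewrite phi0 finset.sub0set L0 mulr0.
rewrite ffunE (negbTE i0).
have E : forall (b : bool) (n : nat) (c : R), ((b%:R * (-1) ^+ n : int))%:~R * c = (if b then (-1) ^+ n * c else 0).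
  by case=> n c; rewrite /= ?mul1r ?mul0r ?intr_sign.
by rewrite E.
Qed.


Theorem theorem6 (R : realType) (k : nat) (Fasc : {set {set 'I_k}}) :
  ascending Fasc -> finset.set0 \notin Fasc ->
  homeomorphic (closure_int_simplex (R := R) Fasc) (LL (R := R) Fasc).
Proof.
move=> _ F0.
have E : forall x : {ffun cell k -> R}, closure_int_simplex Fasc x <-> LL Fasc x.
  move=> x; split.
    move=> [Hc xs]; split => //.
    exact: (XA_to_beta F0 xs (closure_to_XA xs Hc)).
  move=> [xs [beta [H1 H2]]]; split => //.
  exact: (XA_to_closure xs (beta_to_XA xs H1 H2)).
exists (fun x => x), (fun x => x).
split; first by move=> x /E.
split; first by move=> x /E.
split; first by [].
split; first by [].
split.
  by move=> x _ e e0; exists e => // y _ H c'; exact: H.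
by move=> x _ e e0; exists e => // y _ H c'; exact: H.
Qed.
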